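(* Let $R$ be a Noetherian ring and $J=(f_1,\ldots,f_t)\subseteq I$ ideals such that $J\subseteq I$ is Aluffi torsion-free. For $1\le i\le t$ let $J_i=(f_1,\ldots,f_i)$. If $(J_{i}:_Rf_{i+1})=J_{i}$ for every $1\le i\le t-1$, then $J\subseteq I$ is strongly Aluffi torsion-free (with respect to the generators $f_1,\ldots,f_t$ in this order).
   Context: A pair of ideals $J\subseteq I$ in a ring $R$ is called Aluffi torsion-free if $J\cap I^n=JI^{n-1}$ for all $n\ge1$ (with $I^0=R$). For an ideal $J=(f_1,\ldots,f_t)\subseteq I$ with given ordered generators, the pair is called strongly Aluffi torsion-free if $J_i=(f_1,\ldots,f_i)\subseteq I$ is Aluffi torsion-free for each $i=1,\ldots,t$. *)

(* Defs.v *)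
From HB Require Import structures.
From mathcomp Require Import all_boot all_order all_algebra.
Set Implicit Arguments. Unset Strict Implicit. Unset Printing Implicit Defensive.
Import GRing.Theory.
Local Open Scope ring_scope.

Section IdealDefs.
Variable R : comNzRingType.

Definition is_ideal (I : R -> Prop) : Prop :=
  [/\ I 0, (forall x y, I x -> I y -> I (x + y)) & (forall r x, I x -> I (r * x))].

Definition subI (I J : R -> Prop) : Prop := forall x, I x -> J x.
Definition eqI (I J : R -> Prop) : Prop := forall x, I x <-> J x.

Inductive prodI (I J : R -> Prop) : R -> Prop :=
  | prodI0 : prodI I J 0
  | prodI_mul a b : I a -> J b -> prodI I J (a * b)
  | prodI_add x y : prodI I J x -> prodI I J y -> prodI I J (x + y).

Fixpoint powI (I : R -> Prop) (n : nat) : R -> Prop :=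
  match n with
  | O => fun _ => True
  | S m => prodI (powI I m) I
  end.

Definition colonI (J : R -> Prop) (f : R) : R -> Prop := fun x => J (x * f).

(* Ideal generated by f_1, ..., f_i (here f 0, ..., f (i-1)). *)
Definition genI (f : nat -> R) (i : nat) : R -> Prop :=
  fun x => exists r : nat -> R, x = \sum_(k < i) r k * f k.

Definition noetherian : Prop :=
  forall C : nat -> R -> Prop,
    (forall n, is_ideal (C n)) ->
    (forall n, subI (C n) (C n.+1)) ->
    exists N, forall n, (N <= n)%N -> subI (C n) (C N).

Definition aluffi_tf (J I : R -> Prop) : Prop :=
  subI J I /\
  forall n : nat, (0 < n)%N ->
    eqI (fun x => J x /\ powI I n x) (prodI J (powI I n.-1)).

Definition strongly_aluffi_tf (f : nat -> R) (t : nat) (I : R -> Prop) : Prop :=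
  forall i : nat, (1 <= i <= t)%N -> aluffi_tf (genI f i) I.

End IdealDefs.

(* Main.v *)
Require Import Defs.
From HB Require Import structures.
From mathcomp Require Import all_boot all_order all_algebra.
From mathcomp Require Import ring zify.
Local Open Scope ring_scope.
Import GRing.Theory.
Set Implicit Arguments. Unset Strict Implicit.

Section Aux.
Variable R : comNzRingType.
Implicit Types (f : nat -> R) (I : R -> Prop).

Lemma genI0 f i : genI f i 0.
Proof. exists (fun _ => 0); by rewrite big1 // => k _; rewrite mul0r. Qed.

Lemma genI_add f i x y : genI f i x -> genI f i y -> genI f i (x + y).
Proof.
move=> [r ->] [s ->]; exists (fun k => r k + s k).
by rewrite -big_split /=; apply: eq_bigr => k _; rewrite mulrDl.
Qed.

Lemma genI_mul f i c x : genI f i x -> genI f i (c * x).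
Proof.
move=> [r ->]; exists (fun k => c * r k).
by rewrite big_distrr /=; apply: eq_bigr => k _; rewrite mulrA.
Qed.

Lemma genI_widen f i j x : (i <= j)%N -> genI f i x -> genI f j x.
Proof.
move=> hij [r ->]; exists (fun k => if (k < i)%N then r k else 0).
rewrite (big_ord_widen j (fun k => r k * f k)) // big_mkcond /=.
by apply: eq_bigr => k _; case: ifP => // _; rewrite mul0r.
Qed.

Lemma genI_decomp f i x : genI f i.+1 x ->
  exists a c, genI f i a /\ x = a + c * f i.
Proof.
move=> [r ->]; exists (\sum_(k < i) r k * f k), (r i); split.
  by exists r.
by rewrite big_ord_recr.
Qed.

Lemma genI_gen f i : genI f i.+1 (f i).
Proof.
exists (fun l => (l == i)%:R); rewrite big_ord_recr /= eqxx mul1r big1 ?add0r //.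
by move=> k _; rewrite (ltn_eqF (ltn_ord k)) mul0r.
Qed.

Lemma prodI_lmul (A B : R -> Prop) r x :
  (forall r x, A x -> A (r * x)) -> prodI A B x -> prodI A B (r * x).
Proof.
move=> hA; elim=> [|a b Ha Hb|x1 y1 _ H1 _ H2].
- rewrite mulr0; exact: prodI0.
- rewrite mulrA; apply: prodI_mul => //; exact: hA.
- rewrite mulrDr; exact: prodI_add.
Qed.

Lemma powI_mul I n r x : powI I n x -> powI I n (r * x).
Proof.
elim: n r x => [//|n IH] r x /= H; apply: prodI_lmul => //.
Qed.

Lemma powI_0 I n : powI I n 0.
Proof. by case: n => [//|n] /=; apply: prodI0. Qed.

Lemma prodI_gen f i (B : R -> Prop) x : prodI (genI f i) B x -> genI f i x.
Proof.
elim=> [|a b Ha _|x1 y1 _ H1 _ H2]; first exact: genI0.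
- rewrite mulrC; exact: genI_mul.
- exact: genI_add.
Qed.

Lemma prodI_pow (A : R -> Prop) I n x : subI A I ->
  prodI A (powI I n) x -> powI I n.+1 x.
Proof.
move=> hAI; elim=> [|a b Ha Hb|x1 y1 _ H1 _ H2] /=.
- exact: prodI0.
- rewrite mulrC; apply: prodI_mul => //; exact: hAI.
- exact: prodI_add.
Qed.

Lemma decomp f i I m x : prodI (genI f i.+1) (powI I m) x ->
  exists y z, prodI (genI f i) (powI I m) y /\ powI I m z /\ x = y + f i * z.
Proof.
elim=> [|a b Ha Hb|x1 y1 _ [y1' [z1 [H1 [H1' ->]]]] _ [y2' [z2 [H2 [H2' ->]]]]].
- exists 0, 0; split; first exact: prodI0.
  split; [exact: powI_0 | by rewrite mulr0 addr0].
- have [a' [c [Ha' ->]]] := genI_decomp Ha.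
  exists (a' * b), (c * b); split; first exact: prodI_mul.
  split; [exact: powI_mul | ring].
- exists (y1' + y2'), (z1 + z2); split; first exact: prodI_add.
  split; last by ring.
  case: (m) H1' H2' => [//|m'] /= *; exact: prodI_add.
Qed.

Lemma laststep f i I m c z : I c -> prodI (genI f i) (powI I m) z ->
  prodI (genI f i) (powI I m.+1) (c * z).
Proof.
move=> Ic; elim=> [|a b Ha Hb|x1 y1 _ H1 _ H2].
- rewrite mulr0; exact: prodI0.
- have -> : c * (a * b) = a * (b * c) by ring.
  by apply: prodI_mul => //=; apply: prodI_mul.
- rewrite mulrDr; exact: prodI_add.
Qed.

Lemma step f i I : aluffi_tf (genI f i.+1) I ->
  eqI (colonI (genI f i) (f i)) (genI f i) -> aluffi_tf (genI f i) I.
Proof.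
move=> [hsub hA] hcol.
have hsub' : subI (genI f i) I.
  by move=> x hx; apply: hsub; apply: (genI_widen (leqnSn i)).
split => // n; case: n => [//|m] _ x; split; last first.
  move=> hx; split; first exact: (prodI_gen hx).
  exact: (prodI_pow hsub').
have key : forall m x, genI f i x -> powI I m.+1 x -> exists y z,
    prodI (genI f i) (powI I m) y /\ genI f i z /\ powI I m z /\ x = y + f i * z.
  move=> m' x' hx hp.
  have hx' : genI f i.+1 x' by apply: (genI_widen (leqnSn i)).
  have hd := proj1 (hA _ (ltn0Sn m') x') (conj hx' hp).
  have [y [z [hy [hz hxe]]]] := decomp hd.
  exists y, z; split => //; split => //.
  apply/hcol; rewrite /colonI mulrC.
  have -> : f i * z = (y + f i * z) + (-1) * y by ring.
  apply: genI_add; first by rewrite -hxe.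
  apply: genI_mul; exact: (prodI_gen hy).
elim: m x => [|m IH] x [hx hp].
all: have [y [z [hy [hzc [hz ->]]]]] := key _ _ hx hp.
- apply: prodI_add => //; rewrite mulrC; exact: prodI_mul.
- apply: prodI_add => //; apply: laststep.
  + by apply: hsub; apply: genI_gen.
  + exact: IH.
Qed.

End Aux.

(* f k (k = 0..t-1) plays the role of f_(k+1); genI f i = J_i = (f_1,...,f_i). *)
Theorem proposition2p12 (R : comNzRingType) (f : nat -> R) (t : nat)
    (I : R -> Prop) :
  noetherian R ->
  is_ideal I ->
  aluffi_tf (genI f t) I ->
  (forall i : nat, (1 <= i)%N -> (i <= t - 1)%N ->
     eqI (colonI (genI f i) (f i)) (genI f i)) ->
  strongly_aluffi_tf f t I.
Proof.
move=> _ _ hA hcol i /andP [h1 hi].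
have : forall d j, (j + d)%N = t -> (1 <= j)%N -> aluffi_tf (genI f j) I.
  elim=> [|d IH] j hj h1j; first by rewrite addn0 in hj; rewrite hj.
  apply: step; first by apply: IH => //; rewrite addSnnS.
  apply: hcol => //; rewrite -hj; lia.
move=> H; apply: (H (t - i)%N) => //; lia.
Qed.
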